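(* Assume the setting in the context (deterministic $\Phi$ with $\operatorname{rank}(\widehat\Phi_1)=k$). Then, for both the spectral and Frobenius norm, $$\|\sin\angle(\mathcal R(Q),\mathcal R(U_k))\|_{2,F}\le\frac{\delta_k^{2q+1}\|\widehat\Phi_2\widehat\Phi_1^\dagger\|_2\,\|\Sigma_\perp\|_{2,F}}{\sigma_k\sqrt{1+\gamma^{4q+4}\|\widehat\Phi_2\widehat\Phi_1^\dagger\|_2^2}},$$ $$\|\sin\angle(\mathcal R(P),\mathcal R(V_k))\|_{2,F}\le\frac{\delta_k^{2q}\|\widehat\Phi_2\widehat\Phi_1^\dagger\|_2\,\|\Sigma_\perp\|_{2,F}}{\sigma_k\sqrt{1+\gamma^{4q+2}\|\widehat\Phi_2\widehat\Phi_1^\dagger\|_2^2}}.$$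
   Context: Let $A\in\mathbb R^{m\times n}$ with $m\ge n$ have full SVD $A=U\Sigma V^T$, with singular values $\sigma_1\ge\sigma_2\ge\dots\ge\sigma_n\ge 0$. Fix an integer $k\ge1$ with $\sigma_k>0$ (the paper regards $A$ as having numerical rank $k$, i.e. $\sigma_k$ well separated from $\sigma_{k+1}$). Write $U=[U_k\ U_\perp]$ with $U_k\in\mathbb R^{m\times k}$ the first $k$ left singular vectors $u_1,\dots,u_k$, $U_\perp\in\mathbb R^{m\times(m-k)}$ the rest; $V=[V_k\ V_\perp]$ with $V_k\in\mathbb R^{n\times k}$ the first $k$ right singular vectors $v_1,\dots,v_k$; $\Sigma_k=\mathrm{diag}(\sigma_1,\dots,\sigma_k)$ and $\Sigma_\perp$ the remaining diagonal block of $\Sigma$ containing $\sigma_{k+1},\dots,\sigma_n$ (so $\|\Sigma_\perp\|_2=\sigma_{k+1}$, $\|\Sigma_\perp\|_F=(\sum_{i>k}\sigma_i^2)^{1/2}$). The notation $\|\cdot\|_{2,F}$ means the statement holds for both the spectral and Frobenius norm. Let $p\ge1$ be an oversampling integer, $d=k+p<n$, and $q\ge0$ an integer (power-iteration parameter). RU-QLP (Randomized Unpivoted QLP): given $\Phi\in\mathbb R^{m\times d}$, let $\bar P\in\mathbb R^{n\times d}$ have orthonormal columns spanning the range of $(A^TA)^qA^T\Phi$ (assumed of rank $d$); compute the thin unpivoted QR factorization $A\bar P=QR$ with $Q\in\mathbb R^{m\times d}$ having orthonormal columns and $R\in\mathbb R^{d\times d}$ upper triangular; compute the thin unpivoted QR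 factorization $R^T=\widetilde P\widetilde R$; set $P=\bar P\widetilde P\in\mathbb R^{n\times d}$ and $L=\widetilde R^T$ (lower triangular), giving $\hat A=QLP^T$. Partition $R=\begin{bmatrix}R_{11}&R_{12}\\0&R_{22}\end{bmatrix}$ and $L=\begin{bmatrix}L_{11}&0\\L_{21}&L_{22}\end{bmatrix}$ with $R_{11},L_{11}\in\mathbb R^{k\times k}$. Define $\widehat\Phi_1=U_k^T\Phi\in\mathbb R^{k\times d}$ and $\widehat\Phi_2=U_\perp^T\Phi\in\mathbb R^{(m-k)\times d}$, assume $\widehat\Phi_1$ has rank $k$, and let $\dagger$ denote the Moore–Penrose inverse. Set $\delta_i=\sigma_{k+1}/\sigma_i$ for $i=1,\dots,k$ and $\gamma=\sigma_n/\sigma_1$. Principal angles between a subspace $\mathcal X$ and a $k$-dimensional subspace $\mathcal Y$ (with $\dim\mathcal X\ge k$) are the $k$ canonical angles $0\le\alpha_1\le\dots\le\alpha_k\le\pi/2$; for orthonormal bases $X$, $Y$, the values $\sin\alpha_i$ are the singular values of $(I-XX^T)Y$. $\sin\angle(\mathcal X,\mathcal Y)$ denotes the $k\times k$ diagonal matrix $\mathrm{diag}(\sin\alpha_1,\dots,\sin\alpha_k)$. *)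

(* Defs.v *)
From HB Require Import structures.
From mathcomp Require Import all_boot all_order all_algebra.
From mathcomp Require Import classical_sets reals.
Set Implicit Arguments. Unset Strict Implicit. Unset Printing Implicit Defensive.
Import Order.TTheory GRing.Theory Num.Theory.
Local Open Scope ring_scope.
Local Open Scope classical_set_scope.

Definition vnorm {R : realType} {n : nat} (x : 'cV[R]_n) : R :=
  Num.sqrt (\sum_(i < n) x i 0 ^+ 2).

Definition spec_norm {R : realType} {m n : nat} (M : 'M[R]_(m, n)) : R :=
  sup [set r : R | exists x : 'cV[R]_n, vnorm x = 1 /\ r = vnorm (M *m x)].

Definition frob_norm {R : realType} {m n : nat} (M : 'M[R]_(m, n)) : R :=
  Num.sqrt (\sum_(i < m) \sum_(j < n) M i j ^+ 2).

Inductive normkind := Spectral | Frobenius.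

Definition mnorm {R : realType} {m n : nat} (nk : normkind) (M : 'M[R]_(m, n)) : R :=
  match nk with Spectral => spec_norm M | Frobenius => frob_norm M end.

(* Rectangular diagonal matrix Sigma with diagonal entries sv 0, sv 1, ...
   (sv i is sigma_{i+1} in the paper's 1-based numbering). *)
Definition svd_diag {R : realType} {m n : nat} (sv : nat -> R) : 'M[R]_(m, n) :=
  \matrix_(i < m, j < n) (if (i : nat) == (j : nat) then sv j else 0).

Definition MP_inverse {R : realType} {m n : nat} (M : 'M[R]_(m, n)) (X : 'M[R]_(n, m)) : Prop :=
  [/\ M *m X *m M = M, X *m M *m X = X,
      (M *m X)^T = M *m X & (X *m M)^T = X *m M].

(* D = sin angle(R(X), R(Y)) : for orthonormal bases X (of the subspace X, dim a)
   and Y (of the b-dimensional subspace Y), D is the b x b diagonal matrix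
   diag(sin alpha_1, ..., sin alpha_b) (nondecreasing, nonnegative) whose
   diagonal entries are the singular values of (I - X X^T) Y, i.e. there is a
   thin SVD (I - X X^T) Y = W1 D W2^T. *)
Definition sin_angles {R : realType} {m a b : nat}
  (X : 'M[R]_(m, a)) (Y : 'M[R]_(m, b)) (D : 'M[R]_b) : Prop :=
  [/\ is_diag_mx D,
      (forall i : 'I_b, 0 <= D i i),
      (forall i j : 'I_b, (i <= j)%N -> D i i <= D j j) &
      exists (W1 : 'M[R]_(m, b)) (W2 : 'M[R]_b),
        [/\ W1^T *m W1 = 1%:M, W2^T *m W2 = 1%:M &
            (1%:M - X *m X^T) *m Y = W1 *m D *m W2^T]].

(* Main.v *)
Require Import Defs.
From HB Require Import structures.
From mathcomp Require Import all_boot all_order all_algebra.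
From mathcomp Require Import classical_sets reals.
From mathcomp Require Import ring lra zify.
Import Order.TTheory GRing.Theory Num.Theory.
Local Open Scope ring_scope.

Module Helpers.
Set Implicit Arguments. Unset Strict Implicit.
Local Open Scope classical_set_scope.

Section Aux.
Variable R : realType.

Definition tn {m n} (M : 'M[R]_(m,n)) : R := \tr (M^T *m M).
Definition dot {m n} (M N : 'M[R]_(m,n)) : R := \tr (M^T *m N).

Lemma tnE m n (M : 'M[R]_(m,n)) : tn M = \sum_i \sum_j M i j ^+ 2.
Proof.
rewrite /tn /mxtrace exchange_big /=; apply: eq_bigr => i _.
rewrite mxE; apply: eq_bigr => j _; by rewrite mxE expr2.
Qed.

Lemma tn_ge0 m n (M : 'M[R]_(m,n)) : 0 <= tn M.
Proof. by rewrite tnE; apply: sumr_ge0 => i _; apply: sumr_ge0 => j _; apply: sqr_ge0. Qed.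

Lemma vnormE n (x : 'cV[R]_n) : vnorm x = Num.sqrt (tn x).
Proof. by rewrite /vnorm tnE; congr Num.sqrt; apply: eq_bigr => i _; rewrite big_ord1. Qed.

Lemma tn_tr m n (M : 'M[R]_(m,n)) : tn M^T = tn M.
Proof. by rewrite !tnE exchange_big; apply: eq_bigr => i _; apply: eq_bigr => j _; rewrite mxE. Qed.

Lemma dotC m n (M N : 'M[R]_(m,n)) : dot M N = dot N M.
Proof. by rewrite /dot -mxtrace_tr trmx_mul trmxK. Qed.

Lemma tn_orth N m n (W : 'M[R]_(N,m)) (X : 'M[R]_(m,n)) :
  W^T *m W = 1%:M -> tn (W *m X) = tn X.
Proof. by move=> h; rewrite /tn trmx_mul -mulmxA (mulmxA W^T) h mul1mx. Qed.

Lemma tn_col m1 m2 n (a : 'M[R]_(m1,n)) (b : 'M[R]_(m2,n)) :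
  tn (col_mx a b) = tn a + tn b.
Proof. by rewrite /tn tr_col_mx mul_row_col mxtraceD. Qed.

Lemma tn_scale m n c (X : 'M[R]_(m,n)) : tn (c *: X) = c ^+ 2 * tn X.
Proof.
rewrite !tnE mulr_sumr; apply: eq_bigr => i _; rewrite mulr_sumr.
by apply: eq_bigr => j _; rewrite mxE exprMn.
Qed.

Lemma tnD m n (X Y : 'M[R]_(m,n)) : tn (X + Y) = tn X + 2 * dot X Y + tn Y.
Proof.
rewrite /tn /dot; have -> : (X+Y)^T = X^T + Y^T by apply/matrixP=> i j; rewrite !mxE.
rewrite mulmxDl !mulmxDr !mxtraceD.
have -> : \tr (Y^T *m X) = \tr (X^T *m Y) by rewrite -mxtrace_tr trmx_mul trmxK.
by rewrite mulr2n mulrDl !mul1r; ring.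
Qed.

Lemma dotZr m n c (X Y : 'M[R]_(m,n)) : dot X (c *: Y) = c * dot X Y.
Proof. by rewrite /dot -scalemxAr mxtraceZ. Qed.
Lemma dotZl m n c (X Y : 'M[R]_(m,n)) : dot (c *: X) Y = c * dot X Y.
Proof. by rewrite dotC dotZr dotC. Qed.

Lemma CS m n (X Y : 'M[R]_(m,n)) : dot X Y ^+ 2 <= tn X * tn Y.
Proof.
set a := tn X; set b := tn Y; set s := dot X Y.
have ha := tn_ge0 X; have hb := tn_ge0 Y.
have h1 := tn_ge0 (b *: X + (- s) *: Y).
have h2 := tn_ge0 (a *: Y + (- s) *: X).
have h3 := tn_ge0 (X + Y).
have h4 := tn_ge0 (X + (-1) *: Y).
rewrite tnD !tn_scale dotZl dotZr -/a -/b -/s in h1.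
rewrite tnD !tn_scale dotZl dotZr dotC -/a -/b -/s in h2.
rewrite tnD -/a -/b -/s in h3.
rewrite tnD !tn_scale dotZr -/a -/b -/s in h4.
rewrite -/a -/b in ha hb.
have e1 : 0 <= b * (a * b - s ^+ 2) by nra.
have e2 : 0 <= a * (a * b - s ^+ 2) by nra.
have [bp|] := ltrP 0 b.
  by move: e1; rewrite pmulr_rge0 // subr_ge0.
rewrite le_eqVlt ltNge hb orbF => /eqP b0.
have [ap|] := ltrP 0 a.
  by move: e2; rewrite pmulr_rge0 // subr_ge0.
rewrite le_eqVlt ltNge ha orbF => /eqP a0.
rewrite a0 b0 in h3 h4 *; nra.
Qed.


Lemma sqr_le (x y : R) : 0 <= y -> x ^+ 2 <= y ^+ 2 -> x <= y.
Proof. move=> hy h; have [|lt] := lerP x y => //; nra. Qed.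

Lemma sqrt_le_sq (x y : R) : 0 <= y -> x <= y ^+ 2 -> Num.sqrt x <= y.
Proof.
move=> hy h; apply: sqr_le => //.
have [x0|x0] := lerP 0 x; first by rewrite sqr_sqrtr.
rewrite ler0_sqrtr; [nra|exact: ltW].
Qed.

Lemma vnorm_ge0 n (x : 'cV[R]_n) : 0 <= vnorm x.
Proof. by rewrite vnormE sqrtr_ge0. Qed.

Lemma vnorm_sq n (x : 'cV[R]_n) : vnorm x ^+ 2 = tn x.
Proof. by rewrite vnormE sqr_sqrtr // tn_ge0. Qed.

Lemma vnorm_scale n c (x : 'cV[R]_n) : vnorm (c *: x) = `|c| * vnorm x.
Proof. by rewrite !vnormE tn_scale sqrtrM ?sqr_ge0 // sqrtr_sqr. Qed.

Lemma mulmx_entry m n (M : 'M[R]_(m,n)) (x : 'cV[R]_n) i :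
  (M *m x) i 0 = dot (row i M)^T x.
Proof.
rewrite /dot trmxK /mxtrace big_ord1 !mxE; apply: eq_bigr => j _; by rewrite !mxE.
Qed.

Lemma tn_row m n (M : 'M[R]_(m,n)) : \sum_i tn (row i M) = tn M.
Proof. rewrite tnE; apply: eq_bigr => i _; rewrite tnE big_ord1; apply: eq_bigr => j _; by rewrite mxE. Qed.

Lemma tn_mul m n (M : 'M[R]_(m,n)) (x : 'cV[R]_n) : tn (M *m x) <= tn M * tn x.
Proof.
rewrite tnE -tn_row mulr_suml; apply: ler_sum => i _; rewrite big_ord1 mulmx_entry.
by rewrite -(tn_tr (row i M)); apply: CS.
Qed.

Lemma vnorm_mul m n (M : 'M[R]_(m,n)) (x : 'cV[R]_n) :
  vnorm (M *m x) <= Num.sqrt (tn M) * vnorm x.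
Proof.
rewrite !vnormE -sqrtrM ?tn_ge0 //; apply: ler_wsqrtr; exact: tn_mul.
Qed.

Definition specset m n (M : 'M[R]_(m,n)) :=
  [set r : R | exists x : 'cV[R]_n, vnorm x = 1 /\ r = vnorm (M *m x)].

Lemma spec_hasub m n (M : 'M[R]_(m,n)) : has_ubound (specset M).
Proof.
exists (Num.sqrt (tn M)) => r [x [hx ->]].
by have := vnorm_mul M x; rewrite hx mulr1.
Qed.

Lemma spec_ge m n (M : 'M[R]_(m,n)) (x : 'cV[R]_n) :
  vnorm (M *m x) <= spec_norm M * vnorm x.
Proof.
have [x0|xp] := eqVneq (vnorm x) 0.
  have := vnorm_mul M x; rewrite x0 mulr0 => h.
  by rewrite mulr0.
have xp' : 0 < vnorm x by rewrite lt_def xp vnorm_ge0.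
set y := (vnorm x)^-1 *: x.
have hy : vnorm y = 1 by rewrite vnorm_scale ger0_norm ?invr_ge0 ?vnorm_ge0 // mulVf.
have : vnorm (M *m y) <= spec_norm M.
  apply: ub_le_sup; first exact: spec_hasub.
  by exists y.
rewrite -scalemxAr vnorm_scale ger0_norm ?invr_ge0 ?vnorm_ge0 //.
by rewrite ler_pdivrMl // mulrC.
Qed.

Lemma spec_le m n (M : 'M[R]_(m,n)) B : (0 < n)%N ->
  (forall x : 'cV[R]_n, vnorm x = 1 -> vnorm (M *m x) <= B) -> spec_norm M <= B.
Proof.
move=> n0 h; apply: ge_sup.
  exists (vnorm (M *m delta_mx (Ordinal n0) 0)); exists (delta_mx (Ordinal n0) 0); split => //.
  rewrite vnormE tnE (bigD1 (Ordinal n0)) //= big_ord1 mxE !eqxx /= expr1n big1 ?addr0 ?sqrtr1 //.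
  by move=> i hi; rewrite big_ord1 mxE (negbTE hi) /= expr0n.
by move=> r [x [hx ->]]; apply: h.
Qed.

Lemma spec_ge0 m n (M : 'M[R]_(m,n)) : (0 < n)%N -> 0 <= spec_norm M.
Proof.
move=> n0; set e := delta_mx (Ordinal n0) (0 : 'I_1) : 'cV[R]_n.
have he : vnorm e = 1.
  rewrite vnormE tnE (bigD1 (Ordinal n0)) //= big_ord1 mxE !eqxx /= expr1n big1 ?addr0 ?sqrtr1 //.
  by move=> i hi; rewrite big_ord1 mxE (negbTE hi) /= expr0n.
by have := spec_ge M e; rewrite he mulr1; apply: le_trans; apply: vnorm_ge0.
Qed.


Lemma sum_if_eq (a j : nat) (x : R) :
  \sum_(i < a) (if (i : nat) == j then x else 0) = if (j < a)%N then x else 0.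
Proof. by rewrite -big_mkcond /= (big_ord1_eq _ (fun _ => x)). Qed.

Lemma sq_sum_if (b i : nat) (y : 'I_b -> R) :
  (\sum_(j < b) (if i == (j : nat) then y j else 0)) ^+ 2 =
  \sum_(j < b) (if i == (j : nat) then y j ^+ 2 else 0).
Proof.
have [ib|ib] := ltnP i b.
  rewrite (bigD1 (Ordinal ib)) // [in RHS](bigD1 (Ordinal ib)) //= eqxx !big1 ?addr0 //.
    by move=> j hj; case: eqP => // e; case/eqP: hj; apply: val_inj.
  by move=> j hj; case: eqP => // e; case/eqP: hj; apply: val_inj.
rewrite !big1 ?expr0n //.
  by move=> j _; case: eqP => // e; move: (ltn_ord j); rewrite -e ltnNge ib.
by move=> j _; case: eqP => // e; move: (ltn_ord j); rewrite -e ltnNge ib.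
Qed.

Lemma diag_mulE a b c (f g : nat -> R) :
  (svd_diag f : 'M[R]_(a,b)) *m (svd_diag g : 'M[R]_(b,c)) =
  svd_diag (fun i => if (i < b)%N then f i * g i else 0).
Proof.
apply/matrixP => i l; rewrite !mxE.
rewrite (eq_bigr (fun j : 'I_b => if (j : nat) == i then f i * (if (i : nat) == l then g l else 0) else 0)).
  rewrite sum_if_eq; have [e|ne] := eqVneq (i : nat) l.
    by rewrite -e.
  by rewrite mulr0; case: ifP.
move=> j _; rewrite !mxE eq_sym; case: eqP => [e|]; last by rewrite mul0r.
by rewrite e.
Qed.

Lemma diag_tr a b (f : nat -> R) : (svd_diag f : 'M[R]_(a,b))^T = svd_diag f.
Proof. apply/matrixP => i j; rewrite !mxE eq_sym; case: eqP => // ->. by []. Qed.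

Lemma diag_one n : (1%:M : 'M[R]_n) = svd_diag (fun _ => 1).
Proof. by apply/matrixP => i j; rewrite !mxE -val_eqE /=; case: eqP. Qed.

Lemma diag_ext a b (f g : nat -> R) : (forall i, (i < a)%N -> (i < b)%N -> f i = g i) ->
  (svd_diag f : 'M[R]_(a,b)) = svd_diag g.
Proof. move=> h; apply/matrixP => i j; rewrite !mxE; case: eqP => // e; rewrite h // -e //. Qed.

Lemma diag_exp n q (f : nat -> R) :
  (svd_diag f : 'M[R]_n) ^+ q = svd_diag (fun i => f i ^+ q).
Proof.
elim: q => [|q IH]; first by rewrite expr0 (_ : 1 = 1%:M) // diag_one; apply: diag_ext => i _ _; rewrite expr0.
rewrite exprS IH -mulmxE diag_mulE; apply: diag_ext => i hi _; by rewrite hi exprS.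
Qed.

Lemma diag_ul k a b (f : nat -> R) :
  ulsubmx (svd_diag f : 'M[R]_(k + a, k + b)) = svd_diag f.
Proof. by apply/matrixP => i j; rewrite !mxE. Qed.

Lemma diag_ur k a b (f : nat -> R) :
  ursubmx (svd_diag f : 'M[R]_(k + a, k + b)) = 0.
Proof.
apply/matrixP => i j; rewrite !mxE /=; case: eqP => // e.
by move: (ltn_ord i); rewrite e ltnNge leq_addr.
Qed.

Lemma diag_dl k a b (f : nat -> R) :
  dlsubmx (svd_diag f : 'M[R]_(k + a, k + b)) = 0.
Proof.
apply/matrixP => i j; rewrite !mxE /=; case: eqP => // e.
by move: (ltn_ord j); rewrite -e ltnNge leq_addr.
Qed.

Lemma diag_dr k a b (f : nat -> R) :
  drsubmx (svd_diag f : 'M[R]_(k + a, k + b)) = svd_diag (fun j => f (k + j)%N).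
Proof. by apply/matrixP => i j; rewrite !mxE /= eqn_add2l. Qed.

Lemma diag_block k a b (f : nat -> R) :
  (svd_diag f : 'M[R]_(k + a, k + b)) =
  block_mx (svd_diag f) 0 0 (svd_diag (fun j => f (k + j)%N)).
Proof. by rewrite -(@diag_ul k a b f) -(@diag_ur k a b f) -(@diag_dl k a b f) -(@diag_dr k a b f) submxK. Qed.

Lemma diag_tnE a b (f : nat -> R) (v : 'cV[R]_b) :
  tn ((svd_diag f : 'M[R]_(a,b)) *m v) =
  \sum_(j < b) (if (j < a)%N then (f j * v j 0) ^+ 2 else 0).
Proof.
rewrite tnE.
rewrite (eq_bigr (fun i : 'I_a => \sum_(j < b) (if (i : nat) == j then (f j * v j 0) ^+ 2 else 0))).
  rewrite exchange_big /=; apply: eq_bigr => j _.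
  rewrite (eq_bigr (fun i : 'I_a => if (i : nat) == j then (f j * v j 0) ^+ 2 else 0)).
    by rewrite sum_if_eq.
  by [].
move=> i _; rewrite big_ord1 mxE -sq_sum_if; congr (_ ^+ 2); apply: eq_bigr => j _.
by rewrite mxE; case: ifP; rewrite ?mul0r.
Qed.

Lemma diag_tn_le a b (f : nat -> R) (v : 'cV[R]_b) B :
  (forall i, (i < a)%N -> (i < b)%N -> f i ^+ 2 <= B ^+ 2) ->
  tn ((svd_diag f : 'M[R]_(a,b)) *m v) <= B ^+ 2 * tn v.
Proof.
move=> h; rewrite diag_tnE tnE mulr_sumr; apply: ler_sum => j _.
rewrite big_ord1; case: ifP => ja; last by apply: mulr_ge0; [apply: sqr_ge0|apply: sqr_ge0].
rewrite exprMn; apply: ler_wpM2r; [apply: sqr_ge0| exact: h].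
Qed.


Lemma entry_le_tn m n (M : 'M[R]_(m,n)) i j : M i j ^+ 2 <= tn M.
Proof.
rewrite tnE (bigD1 i) //= (bigD1 j) //= -addrA lerDl.
apply: addr_ge0; first by apply: sumr_ge0 => l _; apply: sqr_ge0.
by apply: sumr_ge0 => l _; apply: sumr_ge0 => l' _; apply: sqr_ge0.
Qed.

Lemma tn_eq0 m n (M : 'M[R]_(m,n)) : tn M = 0 -> M = 0.
Proof.
move=> h; apply/matrixP => i j; rewrite mxE.
have := entry_le_tn M i j; rewrite h => h2.
have : M i j ^+ 2 = 0 by apply/eqP; rewrite eq_le h2 sqr_ge0.
by move/eqP; rewrite sqrf_eq0 => /eqP.
Qed.

Lemma tnN m n (M : 'M[R]_(m,n)) : tn (- M) = tn M.
Proof. by rewrite -scaleN1r tn_scale sqrrN expr1n mul1r. Qed.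

Lemma tn_orth_r m n (M : 'M[R]_(m,n)) (W2 : 'M[R]_n) :
  W2^T *m W2 = 1%:M -> tn (M *m W2^T) = tn M.
Proof.
by move=> h; rewrite /tn trmx_mul trmxK -mulmxA (mxtrace_mulC W2) -!mulmxA h mulmx1.
Qed.

Lemma projX N d (X : 'M[R]_(N,d)) : X^T *m X = 1%:M -> (1%:M - X *m X^T) *m X = 0.
Proof. by move=> h; rewrite mulmxBl mul1mx -mulmxA h mulmx1 subrr. Qed.

Lemma proj_tn N d r (X : 'M[R]_(N,d)) (Y : 'M[R]_(N,r)) :
  X^T *m X = 1%:M -> tn ((1%:M - X *m X^T) *m Y) <= tn Y.
Proof.
move=> h; set V := X^T *m Y.
have -> : (1%:M - X *m X^T) *m Y = Y + (-1) *: (X *m V) by rewrite mulmxBl mul1mx scaleN1r mulmxA.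
rewrite tnD dotZr tn_scale tn_orth //.
have -> : dot Y (X *m V) = tn V by rewrite /dot /tn /V trmx_mul trmxK !mulmxA.
have := tn_ge0 V; lra.
Qed.

Lemma hmonoR (s t : R) : 0 <= s -> s <= t -> s / (1 + s) <= t / (1 + t).
Proof.
move=> s0 st; have t0 : 0 <= t by apply: le_trans st.
rewrite ler_pdivrMr; last by lra.
rewrite mulrAC ler_pdivlMr; last by lra.
nra.
Qed.

Lemma alg1 (s : R) : 0 <= s -> (1 - (1 + s)^-1) ^+ 2 + (1 + s)^-1 ^+ 2 * s = s / (1 + s).
Proof. move=> s0; have h : 1 + s != 0 by rewrite lt0r_neq0 //; lra. by field. Qed.

Section Angle.
Variables (k N' d : nat) (W : 'M[R]_(k + N')) (X : 'M[R]_(k + N', d)).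
Variables (F : 'M[R]_(N', k)) (Y0 : 'M[R]_(d, k)).
Hypotheses (hW : W^T *m W = 1%:M) (hX : X^T *m X = 1%:M)
  (hY : W *m col_mx 1%:M F = X *m Y0).

Lemma key r (Z Z' : 'M[R]_(k, r)) :
  tn ((1%:M - X *m X^T) *m (lsubmx W *m Z)) <= tn (Z - Z') + tn (F *m Z').
Proof.
have e : lsubmx W *m Z = W *m col_mx (Z - Z') (- (F *m Z')) + X *m (Y0 *m Z').
  rewrite mulmxA -hY -mulmxA -mulmxDr mul_col_mx mul1mx add_col_mx subrK addNr.
  by rewrite -[in RHS](hsubmxK W) mul_row_col mulmx0 addr0.
rewrite e mulmxDr (mulmxA _ X) projX // mul0mx addr0.
apply: le_trans (proj_tn _ hX) _.
by rewrite tn_orth // tn_col tnN.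
Qed.

Lemma angle_spec (D : 'M[R]_k) T : (0 < k)%N -> sin_angles X (lsubmx W) D -> 0 <= T ->
  (forall z, vnorm (F *m z) <= T * vnorm z) -> spec_norm D <= T / Num.sqrt (1 + T ^+ 2).
Proof.
move=> k0 [_ _ _ [W1 [W2 [h1 h2 hE]]]] T0 hF.
apply: spec_le => // x hx.
set y := W2 *m x.
have hy : tn y = 1 by rewrite /y tn_orth // -vnorm_sq hx expr1n.
have -> : vnorm (D *m x) = vnorm ((1%:M - X *m X^T) *m (lsubmx W *m y)).
  by rewrite mulmxA hE /y !mulmxA -(mulmxA (W1 *m D)) h2 mulmx1 -mulmxA !vnormE (tn_orth _ h1).
set s := tn (F *m y).
have hs : s <= T ^+ 2.
  have := hF y; rewrite [vnorm y]vnormE hy sqrtr1 mulr1 vnormE -/s => h.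
  have s0 : 0 <= s by apply: tn_ge0.
  rewrite -(sqr_sqrtr s0); have := sqrtr_ge0 s; nra.
have s0 : 0 <= s by apply: tn_ge0.
have := key y ((1 + s)^-1 *: y).
have -> : y - (1 + s)^-1 *: y = (1 - (1 + s)^-1) *: y by rewrite scalerBl scale1r.
rewrite -scalemxAr !tn_scale hy -/s mulr1 => hk.
rewrite vnormE; apply: sqrt_le_sq.
  by apply: divr_ge0 => //; apply: sqrtr_ge0.
rewrite expr_div_n sqr_sqrtr; last by lra.
apply: le_trans hk _.
rewrite alg1 //.
exact: hmonoR.
Qed.


Lemma trace1 (B : 'M[R]_1) : \tr B = B 0 0.
Proof. by rewrite /mxtrace big_ord1. Qed.

Lemma quad_entry n (M : 'M[R]_n) j : \tr ((delta_mx j (0 : 'I_1))^T *m (M *m delta_mx j (0 : 'I_1))) = M j j.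
Proof. by rewrite trace1 trmx_delta -colE -rowE !mxE. Qed.

Lemma angle_frob (D : 'M[R]_k) : sin_angles X (lsubmx W) D ->
  frob_norm D ^+ 2 <= \sum_(j < N') (tn (F^T *m delta_mx j (0 : 'I_1)) / (1 + tn (F^T *m delta_mx j (0 : 'I_1)))).
Proof.
move=> [_ _ _ [W1 [W2 [h1 h2 hE]]]].
have -> : frob_norm D ^+ 2 = tn D by rewrite /frob_norm -tnE sqr_sqrtr ?tn_ge0.
have -> : tn D = tn ((1%:M - X *m X^T) *m (lsubmx W *m 1%:M)).
  by rewrite mulmx1 hE tn_orth_r // (tn_orth _ h1).
set N := 1%:M + F^T *m F.
have hFF : F^T *m F = N - 1%:M by rewrite /N addrAC subrr add0r.
have Nu : N \in unitmx.
  rewrite -row_free_unit -kermx_eq0; apply/eqP.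
  set K := kermx N.
  have hK : K *m N = 0 := mulmx_ker N.
  have e0 : tn K^T + tn (F *m K^T) = 0.
    have := congr1 (fun M => \tr (M *m K^T)) hK.
    rewrite /= mul0mx mxtrace0 /N mulmxDr mulmx1 mulmxDl mxtraceD => <-.
    by rewrite /tn !trmx_mul !trmxK !mulmxA.
  have : tn K^T = 0.
    by apply/eqP; rewrite eq_le tn_ge0 andbT -e0 lerDl tn_ge0.
  by move/tn_eq0 => /(congr1 trmx); rewrite trmxK trmx0.
set Z := invmx N.
have NZ : N *m Z = 1%:M by apply: mulmxV.
have ZN : Z *m N = 1%:M by apply: mulVmx.
have NT : N^T = N by rewrite /N linearD /= trmx1 trmx_mul trmxK.
have ZT : Z^T = Z by rewrite /Z trmx_inv NT.
have hk := key 1%:M Z.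
have e : tn (1%:M - Z) + tn (F *m Z) = \tr (1%:M - Z).
  have T1 : (1%:M - Z)^T = 1%:M - Z by rewrite linearB /= trmx1 ZT.
  rewrite /tn -mxtraceD; congr mxtrace; rewrite trmx_mul ZT T1.
  have -> : Z *m F^T *m (F *m Z) = Z - Z *m Z.
    by rewrite mulmxA -(mulmxA Z) hFF mulmxBr ZN mulmx1 mulmxBl mul1mx.
  by rewrite mulmxBl mul1mx mulmxBr mulmx1 subrK.
rewrite e in hk; apply: le_trans hk _.
have -> : 1%:M - Z = F^T *m (F *m Z) by rewrite mulmxA hFF mulmxBl NZ mul1mx.
rewrite mxtrace_mulC /mxtrace; apply: ler_sum => j _.
set u := F^T *m delta_mx j (0 : 'I_1).
have -> : (F *m Z *m F^T) j j = dot u (Z *m u).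
  by rewrite /dot /u -quad_entry trmx_mul trmxK !mulmxA.
set y := Z *m u; set sj := dot u y.
have Ny : N *m y = u by rewrite /y mulmxA NZ mul1mx.
have hs : sj = tn y + tn (F *m y).
  rewrite /sj dotC /dot -Ny /N mulmxDl mul1mx mulmxDr mxtraceD.
  by rewrite /tn [(F *m y)^T]trmx_mul !mulmxA.
have hF : sj ^+ 2 <= tn (F *m y).
  have -> : sj = (F *m y) j 0.
    by rewrite /sj /dot /u trmx_mul trmxK trmx_delta -mulmxA trace1 -rowE mxE.
  exact: entry_le_tn.
have hC : sj ^+ 2 <= tn u * tn y by apply: CS.
have a0 := tn_ge0 u; have t0 := tn_ge0 y; have f0 := tn_ge0 (F *m y).
rewrite ler_pdivlMr; last by lra.
nra.
Qed.

End Angle.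


Lemma pow_le (x y : R) n : 0 <= x -> x <= y -> x ^+ n <= y ^+ n.
Proof. move=> x0 xy; apply: lerXn2r => //; rewrite nnegrE //; exact: le_trans xy. Qed.

Lemma vnorm_of_tn m n (a : 'cV[R]_m) (b : 'cV[R]_n) B :
  0 <= B -> tn a <= B ^+ 2 * tn b -> vnorm a <= B * vnorm b.
Proof.
move=> B0 h; rewrite !vnormE -(ger0_norm B0) -sqrtr_sqr -sqrtrM ?sqr_ge0 //.
exact: ler_wsqrtr.
Qed.

Lemma tn_spec m n (G : 'M[R]_(m,n)) (w : 'cV[R]_n) :
  tn (G *m w) <= spec_norm G ^+ 2 * tn w.
Proof.
have h := spec_ge G w; rewrite -!vnorm_sq -exprMn.
apply: pow_le => //; exact: vnorm_ge0.
Qed.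

Lemma tn_spec_tr m n (G : 'M[R]_(m,n)) (w : 'cV[R]_m) : (0 < n)%N ->
  tn (G^T *m w) <= spec_norm G ^+ 2 * tn w.
Proof.
move=> n0; set c := spec_norm G; have c0 : 0 <= c by apply: spec_ge0.
set v := G^T *m w.
have e : tn v = dot w (G *m v) by rewrite /tn /dot /v trmx_mul trmxK !mulmxA.
have h1 := CS w (G *m v).
have h2 := tn_spec G v.
rewrite -e -/c in h1 h2.
have := tn_ge0 w; have := tn_ge0 v; have := tn_ge0 (G *m v) => g0 v0 w0.
(* tn v ^2 <= tn w * tn (G v) <= tn w * c^2 tn v *)
have h3 : tn v ^+ 2 <= (c ^+ 2 * tn w) * tn v by nra.
have [v00|vp] := eqVneq (tn v) 0; first by rewrite v00; apply: mulr_ge0 => //; apply: sqr_ge0.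
have vp' : 0 < tn v by rewrite lt_def vp v0.
by rewrite expr2 ler_pM2r // in h3.
Qed.

Section FBound.
Variables (k m' n' N' e : nat) (sv : nat -> R) (G : 'M[R]_(m', k)).
Hypotheses (k0 : (0 < k)%N) (e0 : (0 < e)%N)
  (hmono : forall i j : nat, (i <= j < k + n')%N -> sv j <= sv i)
  (hnn : forall i : nat, (i < k + n')%N -> 0 <= sv i)
  (hsk : 0 < sv k.-1) (hn : (0 < n')%N).

Let c := spec_norm G.
Let lam := fun j : nat => if (k + j < k + n')%N then sv (k + j) ^+ e else 0.
Let Kinv : 'M[R]_k := svd_diag (fun i => (sv i ^+ e)^-1).
Let F := (svd_diag lam : 'M[R]_(N', m')) *m G *m Kinv.

Lemma c_ge0 : 0 <= c.
Proof. exact: spec_ge0. Qed.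

Lemma svi_ge i : (i < k)%N -> sv k.-1 <= sv i.
Proof. move=> ik; apply: hmono; apply/andP; split; lia. Qed.

Lemma Kinv_tn (z : 'cV[R]_k) :
  tn ((svd_diag (fun i => (sv i ^+ e)^-1) : 'M[R]_k) *m z) <= ((sv k.-1 ^+ e)^-1) ^+ 2 * tn z.
Proof.
apply: diag_tn_le => i ik _.
have si : 0 < sv i := lt_le_trans hsk (svi_ge ik).
apply: pow_le; first by rewrite invr_ge0 exprn_ge0 // ltW.
rewrite lef_pV2 ?posrE ?exprn_gt0 //; apply: pow_le; [exact: ltW| exact: svi_ge].
Qed.

Lemma lam_sq j : lam j ^+ 2 <= (sv k ^+ e) ^+ 2.
Proof.
rewrite /lam; case: ifP => h; last by rewrite expr0n /=; apply: sqr_ge0.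
rewrite ltn_add2l in h.
have s0 : 0 <= sv (k + j) by apply: hnn; rewrite ltn_add2l.
apply: pow_le; first exact: exprn_ge0.
apply: pow_le => //; apply: hmono; rewrite leq_addr /= ltn_add2l //.
Qed.

Lemma sk_ge0 : 0 <= sv k.
Proof. apply: hnn; lia. Qed.

Lemma F_spec (z : 'cV[R]_k) :
  vnorm (F *m z) <= sv k ^+ e * c / sv k.-1 ^+ e * vnorm z.
Proof.
have sk0 := sk_ge0; have c0 := c_ge0.
apply: vnorm_of_tn.
  by apply: mulr_ge0; [apply: mulr_ge0 => //; apply: exprn_ge0|rewrite invr_ge0 exprn_ge0 // ltW].
rewrite /F -!mulmxA.
set w := G *m (Kinv *m z).
have h3 : tn ((svd_diag lam : 'M[R]_(N', m')) *m w) <= (sv k ^+ e) ^+ 2 * tn w.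
  by apply: diag_tn_le => i _ _; apply: lam_sq.
have h1 : tn w <= c ^+ 2 * tn (Kinv *m z) by apply: tn_spec.
have h2 := Kinv_tn z.
apply: le_trans h3 _.
have -> : (sv k ^+ e * c / sv k.-1 ^+ e) ^+ 2 = (sv k ^+ e) ^+ 2 * (c ^+ 2 * ((sv k.-1 ^+ e)^-1) ^+ 2).
  by rewrite !exprMn mulrA.
rewrite -(mulrA ((sv k ^+ e) ^+ 2)); apply: ler_wpM2l; first by apply: sqr_ge0.
apply: le_trans h1 _; rewrite -(mulrA (c ^+ 2)); apply: ler_wpM2l; first by apply: sqr_ge0.
exact: h2.
Qed.


Lemma lamT_tn j : tn ((svd_diag lam : 'M[R]_(N', m'))^T *m delta_mx j (0 : 'I_1)) <= lam j ^+ 2.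
Proof.
rewrite diag_tr diag_tnE (bigD1 j) //= big1 ?addr0.
  by rewrite mxE !eqxx mulr1; case: ifP => _ //; apply: sqr_ge0.
by move=> l hl; rewrite mxE (negbTE hl) /= mulr0 expr2 mulr0; case: ifP.
Qed.

Lemma FT_tn j : tn (F^T *m delta_mx j (0 : 'I_1)) <= (lam j * c / sv k.-1 ^+ e) ^+ 2.
Proof.
have c0 := c_ge0.
rewrite /F !trmx_mul /Kinv diag_tr -!mulmxA.
apply: le_trans (Kinv_tn _) _.
have -> : (lam j * c / sv k.-1 ^+ e) ^+ 2 = ((sv k.-1 ^+ e)^-1) ^+ 2 * (c ^+ 2 * lam j ^+ 2).
  by rewrite !exprMn; ring.
apply: ler_wpM2l; first by apply: sqr_ge0.
apply: le_trans (tn_spec_tr _ _ k0) _.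
apply: ler_wpM2l; first by apply: sqr_ge0.
exact: lamT_tn.
Qed.

Lemma ratio_le (a b x y : R) : 0 <= a -> a <= x -> 0 < y -> y <= b -> a / b <= x / y.
Proof.
move=> a0 ax y0 yb; have b0 : 0 < b by apply: lt_le_trans yb.
apply: le_trans (_ : a / y <= _).
  by apply: ler_wpM2l => //; rewrite lef_pV2 ?posrE.
by apply: ler_wpM2r => //; rewrite invr_ge0 ltW.
Qed.

Lemma F_frob : (n' <= N')%N ->
  \sum_(j < N') (tn (F^T *m delta_mx j (0 : 'I_1)) / (1 + tn (F^T *m delta_mx j (0 : 'I_1)))) <=
  (\sum_(j < n') sv (k + j) ^+ 2) * ((sv k ^+ e.-1 * c / sv k.-1 ^+ e) ^+ 2 /
     (1 + ((sv (k + n').-1 / sv 0) ^+ e * c) ^+ 2)).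
Proof.
move=> hN; have c0 := c_ge0; have sk0 := sk_ge0.
set L := (sv (k + n').-1 / sv 0) ^+ e * c.
set K := (sv k ^+ e.-1 * c / sv k.-1 ^+ e) ^+ 2 / (1 + L ^+ 2).
have s0p : 0 < sv 0 by apply: lt_le_trans hsk _; apply: hmono; lia.
have L0 : 0 <= L.
  apply: mulr_ge0 => //; apply: exprn_ge0; apply: divr_ge0; [apply: hnn; lia| exact: ltW].
rewrite (big_ord_widen _ (fun j => sv (k + j) ^+ 2) hN) mulr_suml [in X in _ <= X]big_mkcond.
apply: ler_sum => j _.
set b := lam j * c / sv k.-1 ^+ e.
have h1 : tn (F^T *m delta_mx j (0 : 'I_1)) / (1 + tn (F^T *m delta_mx j (0 : 'I_1))) <= b ^+ 2 / (1 + b ^+ 2).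
  by apply: hmonoR; [apply: tn_ge0 | apply: FT_tn].
apply: le_trans h1 _.
rewrite /b /lam ltn_add2l; case: ifP => jn; last first.
  by rewrite !mul0r expr2 mulr0 mul0r.
have sj0 : 0 <= sv (k + j) by apply: hnn; lia.
have eb : b = sv (k + j) ^+ e * c / sv k.-1 ^+ e by rewrite /b /lam ltn_add2l jn.
rewrite -eb.
have hL : L ^+ 2 <= b ^+ 2.
  apply: pow_le => //; rewrite /b /lam ltn_add2l jn mulrAC -expr_div_n.
  apply: ler_wpM2r => //; apply: pow_le.
    by apply: divr_ge0; [apply: hnn; lia| exact: ltW].
  apply: ratio_le => //; [apply: hnn; lia| apply: hmono; lia| apply: hmono; lia].
have hb : b ^+ 2 <= sv (k + j) ^+ 2 * (sv k ^+ e.-1 * c / sv k.-1 ^+ e) ^+ 2.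
  rewrite /b /lam ltn_add2l jn -exprMn; apply: pow_le.
    by apply: mulr_ge0; [apply: mulr_ge0 => //; apply: exprn_ge0|rewrite invr_ge0 exprn_ge0 // ltW].
  rewrite !mulrA; apply: ler_wpM2r; first by rewrite invr_ge0 exprn_ge0 // ltW.
  apply: ler_wpM2r => //.
  have -> : sv (k + j) ^+ e = sv (k + j) * sv (k + j) ^+ e.-1 by rewrite -exprS prednK.
  apply: (ler_wpM2l sj0); apply: pow_le => //.
  apply: hmono; lia.
rewrite /K mulrA.
apply: le_trans (_ : b ^+ 2 / (1 + L ^+ 2) <= _).
  apply: ler_wpM2l; first by apply: sqr_ge0.
  rewrite lef_pV2 ?posrE; [lra| |]; have := sqr_ge0 L; have := sqr_ge0 b; lra.
apply: ler_wpM2r => //; rewrite invr_ge0; have := sqr_ge0 L; lra.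
Qed.

End FBound.


Lemma fin_spec (E' : nat) (sk sk1 sn s1 c Sp : R) :
  0 < sk1 -> sk1 <= s1 -> 0 <= sn -> sn <= sk -> sk <= sk1 -> 0 <= c -> sk <= Sp ->
  sk ^+ E'.+1 * c / sk1 ^+ E'.+1 / Num.sqrt (1 + (sk ^+ E'.+1 * c / sk1 ^+ E'.+1) ^+ 2) <=
  (sk / sk1) ^+ E' * c * Sp / (sk1 * Num.sqrt (1 + (sn / s1) ^+ (E'.+1 * 2) * c ^+ 2)).
Proof.
move=> k1p k1s sn0 snk kk1 c0 kS.
have sk0 : 0 <= sk by apply: le_trans snk.
have s1p : 0 < s1 by apply: lt_le_trans k1s.
set T := sk ^+ E'.+1 * c / sk1 ^+ E'.+1.
set L := (sn / s1) ^+ E'.+1 * c.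
have eT : T = (sk / sk1) ^+ E'.+1 * c by rewrite /T mulrAC -expr_div_n.
have r0 : 0 <= sn / s1 by apply: divr_ge0 => //; apply: ltW.
have L0 : 0 <= L by apply: mulr_ge0 => //; apply: exprn_ge0.
have LT : L <= T.
  rewrite eT; apply: ler_wpM2r => //; apply: pow_le => //; exact: ratio_le.
have T0 : 0 <= T by apply: le_trans LT.
have -> : (sn / s1) ^+ (E'.+1 * 2) * c ^+ 2 = L ^+ 2 by rewrite /L [in RHS]exprMn -exprM.
have q1 : 0 < Num.sqrt (1 + L ^+ 2) by rewrite sqrtr_gt0; have := sqr_ge0 L; lra.
have q2 : 0 < Num.sqrt (1 + T ^+ 2) by rewrite sqrtr_gt0; have := sqr_ge0 T; lra.
apply: le_trans (_ : T / Num.sqrt (1 + L ^+ 2) <= _).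
  apply: ler_wpM2l => //; rewrite lef_pV2 ?posrE //; apply: ler_wsqrtr.
  by rewrite lerD2l; apply: pow_le.
have e : T / Num.sqrt (1 + L ^+ 2) = (sk / sk1) ^+ E' * c * sk / (sk1 * Num.sqrt (1 + L ^+ 2)).
  rewrite eT exprS; field; apply/andP; split; apply: lt0r_neq0 => //.
rewrite e; apply: ler_wpM2r; first by rewrite invr_ge0; apply: mulr_ge0; apply: ltW.
apply: ler_wpM2l => //; apply: mulr_ge0 => //; apply: exprn_ge0; apply: divr_ge0 => //; exact: ltW.
Qed.

Lemma fin_frob (E' : nat) (sk sk1 sn s1 c Sf x : R) :
  0 < sk1 -> 0 <= sk -> 0 <= Sf -> 0 <= c -> 0 <= sn -> 0 < s1 ->
  x ^+ 2 <= Sf ^+ 2 * ((sk ^+ E' * c / sk1 ^+ E'.+1) ^+ 2 / (1 + ((sn / s1) ^+ E'.+1 * c) ^+ 2)) ->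
  x <= (sk / sk1) ^+ E' * c * Sf / (sk1 * Num.sqrt (1 + (sn / s1) ^+ (E'.+1 * 2) * c ^+ 2)).
Proof.
move=> k1p sk0 Sf0 c0 sn0 s1p h.
set L := (sn / s1) ^+ E'.+1 * c.
have -> : (sn / s1) ^+ (E'.+1 * 2) * c ^+ 2 = L ^+ 2 by rewrite /L [in RHS]exprMn -exprM.
have q1 : 0 < Num.sqrt (1 + L ^+ 2) by rewrite sqrtr_gt0; have := sqr_ge0 L; lra.
apply: sqr_le.
  apply: divr_ge0; last by apply: mulr_ge0; apply: ltW.
  apply: mulr_ge0 => //; apply: mulr_ge0 => //; apply: exprn_ge0; apply: divr_ge0 => //; exact: ltW.
apply: le_trans h _; rewrite le_eqVlt; apply/orP; left; apply/eqP.
set sq := Num.sqrt (1 + L ^+ 2).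
have hsq : 1 + L ^+ 2 = sq ^+ 2 by rewrite sqr_sqrtr //; have := sqr_ge0 L; lra.
rewrite hsq [(sk / sk1) ^+ E']expr_div_n [sk1 ^+ E'.+1]exprS.
have h1 : sk1 ^+ E' != 0 by rewrite expf_neq0 // lt0r_neq0.
have h2 : sk1 != 0 by rewrite lt0r_neq0.
have h3 : sq != 0 by rewrite lt0r_neq0.
by field; rewrite h1 h2 h3.
Qed.

Lemma pow_conj n (V M : 'M[R]_n) q : V^T *m V = 1%:M -> V *m V^T = 1%:M ->
  (V *m M *m V^T) ^+ q = V *m M ^+ q *m V^T.
Proof.
move=> h1 h2; elim: q => [|q IH]; first by rewrite !expr0 (_ : 1 = 1%:M) // mulmx1.
rewrite !exprS IH -!mulmxE !mulmxA -(mulmxA _ V^T V) h1 mulmx1.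
by rewrite -!mulmxA.
Qed.

Lemma diag_col k a b (f : nat -> R) (G : 'M[R]_(b,k)) (Ki : 'M[R]_k) :
  (svd_diag f : 'M[R]_(k + a, k + b)) *m col_mx 1%:M G *m Ki =
  col_mx ((svd_diag f : 'M[R]_k) *m Ki) ((svd_diag (fun j => f (k + j)%N) : 'M[R]_(a,b)) *m G *m Ki).
Proof. by rewrite diag_block mul_block_col mulmx1 !mul0mx addr0 add0r mul_col_mx. Qed.

Lemma diag_inv k (f : nat -> R) : (forall i, (i < k)%N -> f i != 0) ->
  (svd_diag f : 'M[R]_k) *m svd_diag (fun i => (f i)^-1) = 1%:M.
Proof. by move=> h; rewrite diag_mulE diag_one; apply: diag_ext => i hi _; rewrite hi mulfV // h. Qed.

End Aux.

End Helpers.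
Import Helpers.
Unset Implicit Arguments.

Theorem theorem3 (R : realType) (k m' n' p q : nat) (nk : normkind)
  (A : 'M[R]_(k + m', k + n')) (U : 'M[R]_(k + m')) (V : 'M[R]_(k + n'))
  (sv : nat -> R)
  (Phi : 'M[R]_(k + m', k + p)) (Phi1pinv : 'M[R]_(k + p, k))
  (Pbar : 'M[R]_(k + n', k + p)) (Q : 'M[R]_(k + m', k + p))
  (Rm Pt Rt : 'M[R]_(k + p)) (D1 D2 : 'M[R]_k) :
  (0 < k)%N -> (n' <= m')%N -> (0 < p)%N -> (p < n')%N ->
  U^T *m U = 1%:M -> V^T *m V = 1%:M ->
  (forall i j : nat, (i <= j < k + n')%N -> sv j <= sv i) ->
  (forall i : nat, (i < k + n')%N -> 0 <= sv i) ->
  A = U *m svd_diag sv *m V^T ->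
  0 < sv k.-1 ->
  \rank ((lsubmx U)^T *m Phi) = k ->
  MP_inverse ((lsubmx U)^T *m Phi) Phi1pinv ->
  Pbar^T *m Pbar = 1%:M ->
  (Pbar^T == ((A^T *m A) ^+ q *m A^T *m Phi)^T)%MS ->
  \rank ((A^T *m A) ^+ q *m A^T *m Phi) = (k + p)%N ->
  Q^T *m Q = 1%:M -> is_trig_mx Rm^T -> A *m Pbar = Q *m Rm ->
  Pt^T *m Pt = 1%:M -> is_trig_mx Rt^T -> Rm^T = Pt *m Rt ->
  sin_angles Q (lsubmx U) D1 ->
  sin_angles (Pbar *m Pt) (lsubmx V) D2 ->
  let c := spec_norm ((rsubmx U)^T *m Phi *m Phi1pinv) in
  let deltak := sv k / sv k.-1 in
  let gamma := sv (k + n')%N.-1 / sv 0%N in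
  let Sperp : 'M[R]_(m', n') := drsubmx (svd_diag sv : 'M[R]_(k + m', k + n')) in
  mnorm nk D1 <= deltak ^+ (2 * q + 1) * c * mnorm nk Sperp
                 / (sv k.-1 * Num.sqrt (1 + gamma ^+ (4 * q + 4) * c ^+ 2))
  /\
  mnorm nk D2 <= deltak ^+ (2 * q) * c * mnorm nk Sperp
                 / (sv k.-1 * Num.sqrt (1 + gamma ^+ (4 * q + 2) * c ^+ 2)).
Proof.
move=> k0 nm p0 pn hU hV hmono hnn hA hsk hrank hMP hPbar hspan _ hQ _ hAP hPt _ _ hD1 hD2.
move=> c deltak gamma Sperp.
have hn : (0 < n')%N by lia.
have m0 : (0 < m')%N by lia.
have n1 : (0 <= k.-1 < k + n')%N by lia.
have n2 : (k.-1 <= k < k + n')%N by lia.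
have n3 : (k <= (k + n').-1 < k + n')%N by lia.
have n4 : (k < k + n')%N by lia.
have n5 : ((k + n').-1 < k + n')%N by lia.
have n6 : forall i, (i < k)%N -> (i < k + n')%N by move=> i; lia.
have n7 : forall i, (i < k + n')%N -> (i < k + m')%N by move=> i; lia.
have n8 : forall i, (i < k)%N -> (i <= k.-1 < k + n')%N by move=> i; lia.
have eq1 : (2 * q + 1 = (2 * q).+1)%N by lia.
have eq2 : (4 * q + 4 = (2 * q).+2 * 2)%N by lia.
have eq3 : (4 * q + 2 = (2 * q).+1 * 2)%N by lia.
set S := (svd_diag sv : 'M[R]_(k + m', k + n')).
set G := (rsubmx U)^T *m Phi *m Phi1pinv.
have UUt : U *m U^T = 1%:M by apply: mulmx1C.
have VVt : V *m V^T = 1%:M by apply: mulmx1C.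
have P1 : (lsubmx U)^T *m Phi *m Phi1pinv = 1%:M.
  have rf : row_free ((lsubmx U)^T *m Phi) by rewrite /row_free hrank.
  case: hMP => h1 _ _ _; apply: (row_free_inj rf); rewrite /= mul1mx; exact: h1.
have UPhi : U^T *m Phi *m Phi1pinv = col_mx 1%:M G.
  have -> : U^T = col_mx (lsubmx U)^T (rsubmx U)^T by rewrite -tr_row_mx hsubmxK.
  by rewrite !mul_col_mx P1.
set Mm := (A^T *m A) ^+ q *m A^T *m Phi.
have AtA : A^T *m A = V *m (S^T *m S) *m V^T.
  rewrite hA !trmx_mul trmxK !mulmxA -(mulmxA (V *m S^T) U^T U) hU mulmx1.
  by rewrite -!mulmxA.
have eM : Mm = V *m ((S^T *m S) ^+ q *m S^T) *m (U^T *m Phi).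
  rewrite /Mm AtA pow_conj // hA !trmx_mul trmxK !mulmxA.
  by rewrite -(mulmxA _ V^T V) hV mulmx1 -!mulmxA.
have eAM : A *m Mm = U *m (S *m ((S^T *m S) ^+ q *m S^T)) *m (U^T *m Phi).
  rewrite eM hA !mulmxA -(mulmxA _ V^T V) hV mulmx1.
  by rewrite -!mulmxA.
have [X0 hX0] : exists X0 : 'M[R]_(k + p), Mm = Pbar *m X0.
  case/andP: hspan => _ /submxP [D hD].
  by exists D^T; rewrite -[Mm]trmxK hD trmx_mul trmxK.
have SD1 : (S^T *m S) ^+ q *m S^T = (svd_diag (fun i => sv i ^+ (2 * q).+1) : 'M[R]_(k + n', k + m')).
  rewrite /S diag_tr diag_mulE diag_exp diag_mulE; apply: diag_ext => i hi1 hi2.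
  rewrite hi1 n7 //.
  by rewrite -expr2 -exprM -exprSr.
have SDQ : S *m ((S^T *m S) ^+ q *m S^T) =
    (svd_diag (fun i => if (i < k + n')%N then sv i ^+ (2 * q).+2 else 0) : 'M[R]_(k + m')).
  by rewrite SD1 /S diag_mulE; apply: diag_ext => i _ _; case: ifP => // _; rewrite -exprS.
have skp : forall i, (i < k)%N -> 0 < sv i.
  by move=> i ik; apply: lt_le_trans hsk _; apply: hmono; apply: n8.
set KQ : 'M[R]_k := svd_diag (fun i => (sv i ^+ (2 * q).+2)^-1).
set lamQ := fun j => if (k + j < k + n')%N then sv (k + j) ^+ (2 * q).+2 else 0.
set FQ := (svd_diag lamQ : 'M[R]_(m', m')) *m G *m KQ.
have hQY : U *m col_mx 1%:M FQ = Q *m (Rm *m X0 *m Phi1pinv *m KQ).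
  have e1 : col_mx 1%:M FQ = (svd_diag (fun i => if (i < k + n')%N then sv i ^+ (2 * q).+2 else 0) : 'M[R]_(k + m')) *m col_mx 1%:M G *m KQ.
    rewrite diag_col; congr col_mx.
    rewrite (@diag_ext R k k _ (fun i => sv i ^+ (2 * q).+2)); last by move=> i ik _; rewrite n6.
    by rewrite diag_inv // => i ik; rewrite expf_neq0 // lt0r_neq0 // skp.
  have h : A *m Mm = Q *m (Rm *m X0) by rewrite hX0 mulmxA hAP -mulmxA.
  rewrite eAM SDQ in h.
  rewrite e1 -UPhi; rewrite !mulmxA in h *; by rewrite h.
have c0 : 0 <= c by apply: spec_ge0.
have FQs := F_spec m' G k0 (isT : (0 < (2 * q).+2)%N) hmono hnn hsk hn.
have T0 : 0 <= sv k ^+ (2 * q).+2 * c / sv k.-1 ^+ (2 * q).+2.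
  apply: divr_ge0; last by apply: exprn_ge0; apply: ltW.
  by apply: mulr_ge0 => //; apply: exprn_ge0; apply: hnn n4.
have specQ := angle_spec hU hQ hQY k0 hD1 T0 FQs.
have frobQ := angle_frob hU hQ hQY hD1.
have frobQ2 := F_frob G k0 (isT : (0 < (2 * q).+2)%N) hmono hnn hsk hn nm.
set KP : 'M[R]_k := svd_diag (fun i => (sv i ^+ (2 * q).+1)^-1).
set lamP := fun j => if (k + j < k + n')%N then sv (k + j) ^+ (2 * q).+1 else 0.
set FP := (svd_diag lamP : 'M[R]_(n', m')) *m G *m KP.
have PtPt : Pt *m Pt^T = 1%:M by apply: mulmx1C.
have hXP : (Pbar *m Pt)^T *m (Pbar *m Pt) = 1%:M.
  by rewrite trmx_mul !mulmxA -(mulmxA _ Pbar^T Pbar) hPbar mulmx1.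
have hPY : V *m col_mx 1%:M FP = (Pbar *m Pt) *m (Pt^T *m X0 *m Phi1pinv *m KP).
  have e1 : col_mx 1%:M FP = (svd_diag (fun i => if (i < k + n')%N then sv i ^+ (2 * q).+1 else 0) : 'M[R]_(k + n', k + m')) *m col_mx 1%:M G *m KP.
    rewrite diag_col; congr col_mx.
    rewrite (@diag_ext R k k _ (fun i => sv i ^+ (2 * q).+1)); last by move=> i ik _; rewrite n6.
    by rewrite diag_inv // => i ik; rewrite expf_neq0 // lt0r_neq0 // skp.
  have e2 : (svd_diag (fun i => if (i < k + n')%N then sv i ^+ (2 * q).+1 else 0) : 'M[R]_(k + n', k + m')) =
            (S^T *m S) ^+ q *m S^T.
    by rewrite SD1; apply: diag_ext => i hi _; rewrite hi.
  have h : Mm = Pbar *m Pt *m (Pt^T *m X0) by rewrite hX0 -!mulmxA (mulmxA Pt) PtPt mul1mx.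
  rewrite eM in h.
  rewrite e1 e2 -UPhi; rewrite !mulmxA in h *; by rewrite h.
have FPs := F_spec n' G k0 (isT : (0 < (2 * q).+1)%N) hmono hnn hsk hn.
have T0' : 0 <= sv k ^+ (2 * q).+1 * c / sv k.-1 ^+ (2 * q).+1.
  apply: divr_ge0; last by apply: exprn_ge0; apply: ltW.
  by apply: mulr_ge0 => //; apply: exprn_ge0; apply: hnn n4.
have specP := angle_spec hV hXP hPY k0 hD2 T0' FPs.
have frobP := angle_frob hV hXP hPY hD2.
have frobP2 := F_frob (N' := n') G k0 (isT : (0 < (2 * q).+1)%N) hmono hnn hsk hn (leqnn n').
have SpE : Sperp = svd_diag (fun j => sv (k + j)) by rewrite /Sperp diag_dr.
have Sp_spec : sv k <= spec_norm Sperp.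
  set e0 := (delta_mx (Ordinal hn) (0 : 'I_1) : 'cV[R]_n').
  have he0 : vnorm e0 = 1.
    rewrite vnormE tnE (bigD1 (Ordinal hn)) //= big_ord1 mxE !eqxx /= expr1n big1 ?addr0 ?sqrtr1 //.
    by move=> i hi; rewrite big_ord1 mxE (negbTE hi) /= expr0n.
  have := spec_ge Sperp e0; rewrite he0 mulr1; apply: le_trans.
  rewrite vnormE SpE diag_tnE (bigD1 (Ordinal hn)) //= big1 ?addr0.
    rewrite m0.
    by rewrite mxE !eqxx mulr1 sqrtr_sqr ger0_norm //; apply: hnn n4.
  by move=> j hj; rewrite mxE (negbTE hj) /= mulr0 expr2 mulr0; case: ifP.
have Sp_frob : frob_norm Sperp ^+ 2 = \sum_(j < n') sv (k + j) ^+ 2.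
  rewrite /frob_norm sqr_sqrtr; last by apply: sumr_ge0 => i _; apply: sumr_ge0 => j _; apply: sqr_ge0.
  rewrite SpE exchange_big /=; apply: eq_bigr => j _.
  rewrite (eq_bigr (fun i : 'I_m' => if (i : nat) == j then sv (k + j) ^+ 2 else 0)).
    by rewrite sum_if_eq (_ : (j < m')%N) //; apply: leq_trans (ltn_ord j) nm.
  by move=> i _; rewrite mxE; case: ifP => _ //; rewrite expr2 mulr0.
have Sf0 : 0 <= frob_norm Sperp by apply: sqrtr_ge0.
have s1p : 0 < sv 0 by apply: lt_le_trans hsk _; apply: hmono n1.
have sk0 : 0 <= sv k by apply: hnn n4.
have sn0 : 0 <= sv (k + n').-1 by apply: hnn n5.
have k1s : sv k.-1 <= sv 0 by apply: hmono n1.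
have snk : sv (k + n').-1 <= sv k by apply: hmono n3.
have kk1 : sv k <= sv k.-1 by apply: hmono n2.
rewrite /deltak /gamma eq1 eq2 eq3.
split; case: nk => /=.
- apply: le_trans specQ _; apply: fin_spec => //.
- apply: fin_frob => //; apply: le_trans frobQ _; rewrite Sp_frob; exact: frobQ2.
- apply: le_trans specP _; apply: fin_spec => //.
- apply: fin_frob => //; apply: le_trans frobP _; rewrite Sp_frob; exact: frobP2.
Qed.
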